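(* Let $n\ge1$ be an integer. Suppose there exists $p>1$ such that for every $s>\frac{n}{2(n+1)}$ there is $C_s$ with $$\Big\|\sup_{0<t<1}|e^{it\Delta}f(x)|\Big\|_{L^p(B(0,1))}\le C_s\|f\|_{H^s(\mathbb{R}^n)}\quad\text{for all }f\in H^s(\mathbb{R}^n).$$ Then $p\le\frac{2(n+1)}{n}$.
   Context: For $f$ on $\mathbb{R}^n$, $e^{it\Delta}f(x):=\int_{\mathbb{R}^n}e^{i(x\cdot\xi+t|\xi|^2)}\hat f(\xi)\,d\xi$; $H^s(\mathbb{R}^n)$ is the $L^2$-based Sobolev space; $B(0,1)$ is the unit ball in $\mathbb{R}^n$. *)

(* Defs.v *)
From HB Require Import structures.
From mathcomp Require Import all_boot all_order all_algebra.
From mathcomp Require Import all_classical all_reals all_analysis.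
Set Implicit Arguments. Unset Strict Implicit. Unset Printing Implicit Defensive.
Import Order.TTheory GRing.Theory Num.Theory.
Import numFieldNormedType.Exports.
Local Open Scope classical_set_scope.
Local Open Scope ring_scope.

(* Points of R^n are n-tuples of reals ('n.-tuple R' carries the product
   (= Borel) sigma-algebra of MathComp-Analysis). *)

(* Lebesgue integral over R^n, written as the iterated integral over the n
   coordinates (Tonelli/Fubini) with respect to one-dimensional Lebesgue
   measure. *)
Fixpoint iint {R : realType} (n : nat) : (n.-tuple R -> \bar R) -> \bar R :=
  match n return (n.-tuple R -> \bar R) -> \bar R with
  | 0 => fun F => F [tuple]
  | k.+1 => fun F =>
      (\int[@lebesgue_measure R]_x iint (fun v : k.-tuple R => F (cons_tuple x v)))%E
  end.

Section Schrodinger.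
Context {R : realType} {n : nat}.

Definition dotp (x y : n.-tuple R) : R := \sum_(i < n) tnth x i * tnth y i.
Definition sqnorm (x : n.-tuple R) : R := \sum_(i < n) tnth x i ^+ 2.

Definition unit_ball : set (n.-tuple R) := [set x | sqnorm x < 1].

(* A complex-valued function on R^n is given by its real and imaginary parts
   (gr, gi); here (gr, gi) is the Fourier transform \hat f of f.
   e^{it\Delta} f (x) = \int e^{i(x.xi + t|xi|^2)} \hat f(xi) dxi,
   real and imaginary parts: *)
Definition schro_re (gr gi : n.-tuple R -> R) (t : R) (x : n.-tuple R) : \bar R :=
  iint (fun xi => (cos (dotp x xi + t * sqnorm xi) * gr xi
                   - sin (dotp x xi + t * sqnorm xi) * gi xi)%:E).
Definition schro_im (gr gi : n.-tuple R -> R) (t : R) (x : n.-tuple R) : \bar R :=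
  iint (fun xi => (sin (dotp x xi + t * sqnorm xi) * gr xi
                   + cos (dotp x xi + t * sqnorm xi) * gi xi)%:E).

Definition schro_abs (gr gi : n.-tuple R -> R) (t : R) (x : n.-tuple R) : R :=
  Num.sqrt (fine (schro_re gr gi t x) ^+ 2 + fine (schro_im gr gi t x) ^+ 2).

Definition schro_max (gr gi : n.-tuple R -> R) (x : n.-tuple R) : \bar R :=
  ereal_sup [set (schro_abs gr gi t x)%:E | t in `]0, 1[%classic].

Definition maxfun_Lp_ball (p : R) (gr gi : n.-tuple R -> R) : \bar R :=
  ((iint (fun x => if `[< unit_ball x >] then (schro_max gr gi x `^ p)%E
                   else 0%E)) `^ p^-1)%E.

Definition cabs (gr gi : n.-tuple R -> R) (xi : n.-tuple R) : R :=
  Num.sqrt (gr xi ^+ 2 + gi xi ^+ 2).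

Definition Hs_norm (s : R) (gr gi : n.-tuple R -> R) : \bar R :=
  ((iint (fun xi => ((1 + sqnorm xi) `^ s * cabs gr gi xi ^+ 2)%:E)) `^ (2^-1))%E.

End Schrodinger.

(* Main.v *)
Require Import Defs.
From HB Require Import structures.
From mathcomp Require Import all_boot all_order all_algebra.
From mathcomp Require Import all_classical all_reals all_analysis.
From mathcomp Require Import ring lra.
Import Order.TTheory GRing.Theory Num.Theory.
Import numFieldNormedType.Exports.
Local Open Scope classical_set_scope.
Local Open Scope ring_scope.

Section Aux.
Context {R : realType}.

Definition box n (a b : R) (v : n.-tuple R) : R :=
  \prod_(i < n) \1_(`[a, b]%classic) (tnth v i).

Arguments box {n}.

Lemma box_ge0 n a b v : 0 <= @box n a b v.
Proof. by apply: prodr_ge0 => i _; rewrite indicE. Qed.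

Lemma box_le1 n a b v : @box n a b v <= 1.
Proof. by apply: prodr_ile1 => i _; rewrite indicE; case: (_ \in _) => /=; rewrite ?ler01 ?lexx. Qed.

Lemma box01 n a b v : @box n a b v = 0 \/ (@box n a b v = 1 /\ forall i, a <= tnth v i <= b).
Proof.
have [H|H] := pselect (forall i, a <= tnth v i <= b).
  right; split => //; rewrite /box; apply: big1 => i _; rewrite indicE mem_set //=.
  by rewrite in_itv /= H.
left; move/existsNP: H => [i Hi]; rewrite /box (bigD1 i) //= indicE memNset ?mul0r //=.
Qed.

Lemma measurable_box n a b : measurable_fun setT (@box n a b).
Proof.
rewrite /box; elim: (index_enum _) => [|i r IH].
  under eq_fun do rewrite big_nil; exact: measurable_cst.
under eq_fun do rewrite big_cons.
apply: measurable_realfun.measurable_funM => //.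
apply: (measurableT_comp (f := \1_(`[a, b]%classic) : R -> R)); last exact: measurable_tnth.
by apply: measurable_realfun.measurable_indic.
Qed.

Local Open Scope ereal_scope.
Lemma iint_box n (c a b : R) : (0 <= c)%R -> (a <= b)%R ->
  iint (fun v => (c * @box n a b v)%:E) = (c * (b - a) ^+ n)%:E.
Proof.
elim: n c => [|k IH] c c0 ab /=.
  by rewrite /box big_ord0 expr0.
have -> : (fun x => iint (fun v : k.-tuple R => (c * box a b (cons_tuple x v))%:E))
   = (fun x => ((c * (b - a) ^+ k) * \1_(`[a, b]%classic) x)%:E).
  apply: funext => x.
  have -> : (fun v : k.-tuple R => (c * box a b (cons_tuple x v))%:E)
     = (fun v => ((c * \1_(`[a, b]%classic) x) * box a b v)%:E).
    apply: funext => v; rewrite /box big_ord_recl /=.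
    congr (_%:E); rewrite mulrA.
    have -> : tnth (cons_tuple x v) ord0 = x by [].
    by congr (_ * _)%R; apply: eq_bigr => i _; rewrite tnthS.
  rewrite (IH (c * \1_(`[a, b]%classic) x)%R) //; last first.
    by rewrite mulr_ge0 // indicE; case: (_ \in _) => /=.
  by rewrite [in RHS]mulrAC.
have := integralZl_indic (m := @lebesgue_measure R) measurableT (fun _ => `[a, b]%classic) (c * (b - a) ^+ k)%R; rewrite /= => -> //; last first.
  by rewrite ltNge mulr_ge0 // exprn_ge0 // subr_ge0.
rewrite integral_indic // setIT.
have := lebesgue_measure_itv `[a, b]; rewrite /= => ->.
case: (ltP a b) => ab'.
  by rewrite lte_fin ab' -EFinM exprSr mulrA.
have -> : b = a by apply/eqP; rewrite eq_le ab ab'.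
by rewrite ltxx subrr expr0n /= mule0 expr0n /= mulr0.
Qed.

Lemma int_le_nm (f g : R -> \bar R) : (forall x, 0 <= f x) -> (forall x, f x <= g x) ->
  \int[@lebesgue_measure R]_x f x <= \int[@lebesgue_measure R]_x g x.
Proof.
move=> f0 fg.
have g0 : forall x, 0 <= g x by move=> x; exact: le_trans (f0 x) (fg x).
rewrite !ge0_integralTE//.
apply: ereal_sup_le => _ [h hf <-]; exists h => //= x.
exact: le_trans (hf x) (fg x).
Qed.

Lemma iint_ge0 n (F : n.-tuple R -> \bar R) : (forall v, 0 <= F v) -> 0 <= iint F.
Proof.
elim: n F => [|k IH] F F0 /=; first exact: F0.
apply: integral_ge0 => x _; exact: IH.
Qed.

Lemma iint_le n (F G : n.-tuple R -> \bar R) : (forall v, 0 <= F v) ->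
  (forall v, F v <= G v) -> iint F <= iint G.
Proof.
elim: n F G => [|k IH] F G F0 FG /=; first exact: FG.
apply: int_le_nm => x; first by apply: iint_ge0.
exact: IH.
Qed.

End Aux.


Section B.
Context {R : realType}.
Arguments box {R n}.

Lemma cos_ge1 (y : R) : 0 <= y <= 1 -> cos 1 <= cos y.
Proof.
move=> /andP[y0 y1].
have pi1 : (1 : R) <= pi by apply: le_trans (pi_ge2 R); rewrite ler1n.
have [->|yn1] := eqVneq y 1; first by [].
apply/ltW; rewrite ltr_cos ?in_itv /= ?y0 ?(le_trans y1) ?ler01 //.
by rewrite lt_neqAle yn1 y1.
Qed.

Lemma sqnorm_le n (L : R) (v : n.-tuple R) : (forall i, 0 <= tnth v i <= L) ->
  sqnorm v <= n%:R * L ^+ 2.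
Proof.
move=> H; rewrite /sqnorm.
apply: le_trans (_ : \sum_(i < n) L ^+ 2 <= _).
  apply: ler_sum => i _; have /andP[a b] := H i.
  by rewrite !expr2 ler_pM.
by rewrite sumr_const card_ord mulr_natl.
Qed.

Lemma sqnorm_ge0 n (v : n.-tuple R) : 0 <= sqnorm v.
Proof. by apply: sumr_ge0 => i _; rewrite sqr_ge0. Qed.

Lemma dotp_bd n (a b : R) (x v : n.-tuple R) : (forall i, 0 <= tnth x i <= a) ->
  (forall i, 0 <= tnth v i <= b) -> 0 <= dotp x v <= n%:R * (a * b).
Proof.
move=> Hx Hv; rewrite /dotp; apply/andP; split.
  apply: sumr_ge0 => i _; have /andP[? _] := Hx i; have /andP[? _] := Hv i.
  exact: mulr_ge0.
apply: le_trans (_ : \sum_(i < n) (a * b) <= _).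
  apply: ler_sum => i _; have /andP[? ?] := Hx i; have /andP[? ?] := Hv i.
  by rewrite ler_pM.
by rewrite sumr_const card_ord mulr_natl.
Qed.


Lemma schro_lb n (L : R) (x : n.-tuple R) : (0 < n)%N -> 1 <= L ->
  (forall i, 0 <= tnth x i <= (2 * n%:R * L)^-1) ->
  ((cos 1 * L ^+ n)%:E <= schro_max (box 0 L) (fun _ => 0%R) x)%E.
Proof.
move=> n0 L1 Hx.
have L0 : 0 < L by apply: lt_le_trans L1.
have nR0 : (0 : R) < n%:R by rewrite ltr0n.
set tau := (2 * n%:R * L ^+ 2)^-1.
have tau0 : 0 < tau by rewrite invr_gt0 !mulr_gt0 // exprn_gt0.
have key : forall xi : n.-tuple R, box 0 L xi = 1 ->
    0 <= dotp x xi + tau * sqnorm xi <= 1.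
  move=> xi /[dup] b1; case: (box01 _ 0 L xi) => [->|[_ Hxi]]; first by move=> /eqP; rewrite eq_sym oner_eq0.
  move=> _; have /andP[d0 d1] := dotp_bd _ _ _ _ _ Hx Hxi.
  have s0 := sqnorm_ge0 _ xi; have s1 := sqnorm_le _ _ _ Hxi.
  apply/andP; split; first by rewrite addr_ge0 // mulr_ge0 // ltW.
  have e1 : n%:R * ((2 * n%:R * L)^-1 * L) = 2^-1 :> R.
    by field; rewrite ?pnatr_eq0 -?lt0n // gt_eqF.
  have e2 : tau * (n%:R * L ^+ 2) = 2^-1.
    by rewrite /tau; field; rewrite ?pnatr_eq0 -?lt0n // ?gt_eqF // exprn_gt0.
  rewrite e1 in d1.
  have : tau * sqnorm xi <= 2^-1 by rewrite -e2 ler_pM2l.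
  move=> h; apply: le_trans (lerD d1 h) _.
  by lra.
have c1 : 0 < cos 1 :> R := cos1_gt0 R.
have lb : ((cos 1 * L ^+ n)%:E <= schro_re (box 0 L) (fun _ => 0%R) tau x)%E.
  have := iint_box n (cos 1) 0 L (ltW c1) (ltW L0); rewrite subr0 => <-.
  apply: iint_le => xi; first by rewrite lee_fin mulr_ge0 ?box_ge0 // ltW.
  rewrite lee_fin mulr0 subr0.
  case: (box01 _ 0 L xi) => [->|[b1 _]]; first by rewrite !mulr0.
  by rewrite b1 !mulr1; apply: cos_ge1; apply: key.
have ub : (schro_re (box 0 L) (fun _ => 0%R) tau x <= (L ^+ n)%:E)%E.
  have := iint_box n 1 0 L ler01 (ltW L0); rewrite subr0 mul1r => <-.
  apply: iint_le => xi.
    rewrite lee_fin mulr0 subr0.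
    case: (box01 _ 0 L xi) => [->|[b1 _]]; first by rewrite !mulr0.
    by rewrite b1 mulr1; apply: le_trans (ltW c1) (cos_ge1 _ (key _ b1)).
  rewrite lee_fin mulr0 subr0 mul1r.
  case: (box01 _ 0 L xi) => [->|[b1 _]]; first by rewrite !mulr0.
  by rewrite b1 mulr1 cos_le1.
have tau1 : tau < 1.
  rewrite /tau invf_lt1 ?mulr_gt0 ?exprn_gt0 //.
  have h1 : (1 : R) <= n%:R by rewrite ler1n.
  have h2 : (1 : R) <= L ^+ 2 by rewrite expr_ge1 // ltW.
  have : (1 : R) <= n%:R * L ^+ 2 by nra.
  by rewrite -mulrA; lra.
have habs : cos 1 * L ^+ n <= schro_abs (box 0 L) (fun _ => 0%R) tau x.
  rewrite /schro_abs; move: lb ub.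
  case: (schro_re (box 0 L) (fun _ => 0%R) tau x) => [r||] //= lb _.
  rewrite lee_fin in lb; apply: (le_trans lb); apply: (le_trans (ler_norm r)).
  rewrite -sqrtr_sqr ler_sqrt ?addr_ge0 ?sqr_ge0 //.
  by rewrite lerDl sqr_ge0.
apply: (@le_trans _ _ ((schro_abs (box 0 L) (fun _ => 0%R) tau x)%:E)); first by rewrite lee_fin.
apply: ereal_sup_ubound; exists tau => //.
by rewrite /= in_itv /= tau0 tau1.
Qed.


Lemma maxfun_lb n (L p : R) : (0 < n)%N -> 1 <= L -> 0 < p ->
  (((((cos 1 * L ^+ n) `^ p) * ((2 * n%:R * L)^-1) ^+ n) `^ p^-1)%:E
    <= maxfun_Lp_ball p (@box R n 0 L) (fun _ => 0%R))%E.
Proof.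
move=> n0 L1 p0.
have L0 : 0 < L by apply: lt_le_trans L1.
have nR0 : (0 : R) < n%:R by rewrite ltr0n.
have d0 : 0 <= (2 * n%:R * L)^-1 by rewrite invr_ge0 ltW // !mulr_gt0.
rewrite /maxfun_Lp_ball -poweR_EFin.
apply: gt0_ler_poweR; first by rewrite invr_ge0 ltW.
- by rewrite in_itv /= leey andbT lee_fin mulr_ge0 ?powR_ge0 ?exprn_ge0.
- by rewrite in_itv /= leey andbT; apply: iint_ge0 => v; case: ifP => _ //; apply: poweR_ge0.
have := iint_box n ((cos 1 * L ^+ n) `^ p) 0 ((2 * n%:R * L)^-1) (powR_ge0 _ _) d0.
rewrite subr0 => <-.
apply: iint_le => v; first by rewrite lee_fin mulr_ge0 ?powR_ge0 ?box_ge0.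
case: (box01 _ 0 ((2 * n%:R * L)^-1) v) => [->|[b1 Hv]].
  by rewrite mulr0; case: ifP => _ //; apply: poweR_ge0.
have ub : unit_ball v.
  rewrite /unit_ball /=; apply: le_lt_trans (sqnorm_le _ _ _ Hv) _.
  have e : n%:R * ((2 * n%:R * L)^-1) ^+ 2 = (4 * n%:R * L ^+ 2)^-1 :> R.
    by field; rewrite ?pnatr_eq0 -?lt0n // gt_eqF.
  rewrite e invf_lt1 ?mulr_gt0 ?exprn_gt0 //.
  have h1 : (1 : R) <= n%:R by rewrite ler1n.
  have h2 : (1 : R) <= L ^+ 2 by rewrite expr_ge1 // ltW.
  have : (1 : R) <= n%:R * L ^+ 2 by nra.
  by rewrite -mulrA; lra.
rewrite asboolT // b1 mulr1 -poweR_EFin.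
apply: gt0_ler_poweR; first exact: ltW.
- by rewrite in_itv /= leey andbT lee_fin mulr_ge0 ?exprn_ge0 ?ltW ?cos1_gt0.
- rewrite in_itv /= leey andbT; apply: le_trans (schro_lb _ _ _ n0 L1 Hv).
  by rewrite lee_fin mulr_ge0 ?exprn_ge0 ?ltW ?cos1_gt0.
exact: schro_lb.
Qed.


Lemma cabs_box n (L : R) (xi : n.-tuple R) : cabs (box 0 L) (fun _ => 0%R) xi = box 0 L xi.
Proof.
by rewrite /cabs expr0n /= addr0 sqrtr_sqr ger0_norm // box_ge0.
Qed.

Lemma cabs_iint n (L : R) : 0 <= L ->
  iint (fun xi => (cabs (@box R n 0 L) (fun _ => 0%R) xi)%:E) = (L ^+ n)%:E.
Proof.
move=> L0; under eq_fun do rewrite cabs_box -[box 0 L _]mul1r.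
by rewrite iint_box ?ler01 // subr0 mul1r.
Qed.

Lemma hs_ub n (L s : R) : 0 <= L -> 0 <= s ->
  (iint (fun xi => ((1 + sqnorm xi) `^ s * cabs (@box R n 0 L) (fun _ => 0%R) xi ^+ 2)%:E)
    <= (((1 + n%:R * L ^+ 2) `^ s) * L ^+ n)%:E)%E.
Proof.
move=> L0 s0.
have := iint_box n ((1 + n%:R * L ^+ 2) `^ s) 0 L (powR_ge0 _ _) L0.
rewrite subr0 => <-.
apply: iint_le => v; first by rewrite lee_fin mulr_ge0 ?powR_ge0 ?sqr_ge0.
rewrite cabs_box lee_fin.
case: (box01 _ 0 L v) => [->|[b1 Hv]]; first by rewrite expr0n /= !mulr0.
rewrite b1 expr1n !mulr1; apply: ge0_ler_powR => //.
- by rewrite nnegrE addr_ge0 ?sqnorm_ge0.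
- by rewrite nnegrE addr_ge0 ?mulr_ge0 ?sqr_ge0.
by rewrite lerD2l; apply: sqnorm_le.
Qed.

End B.

Theorem theorem1p5 (R : realType) (n : nat) (hn : (1 <= n)%N) (p : R) :
  1 < p ->
  (forall s : R, n%:R / (2 * n.+1%:R) < s ->
     exists C : R, forall gr gi : n.-tuple R -> R,
       measurable_fun setT gr -> measurable_fun setT gi ->
       (iint (fun xi => (cabs gr gi xi)%:E) < +oo)%E ->
       (Hs_norm s gr gi < +oo)%E ->
       (maxfun_Lp_ball p gr gi <= C%:E * Hs_norm s gr gi)%E) ->
  p <= 2 * n.+1%:R / n%:R.
Proof.
move=> p1 H.
rewrite leNgt; apply/negP => hp.
have p0 : 0 < p by apply: lt_trans p1.
have nR0 : (0 : R) < n%:R by rewrite ltr0n.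
have m0 : (0 : R) < n.+1%:R by rewrite ltr0n.
rewrite ltr_pdivrMr // in hp.
set q := n%:R / p.
have hq : n%:R / (2 * n.+1%:R) < n%:R / 2 - q.
  rewrite -subr_gt0.
  have -> : n%:R / 2 - q - n%:R / (2 * n.+1%:R)
       = n%:R * (p * n%:R - 2 * n.+1%:R) / (2 * p * n.+1%:R).
    by rewrite /q -natr1; field; rewrite addrC natr1 !gt_eqF.
  by rewrite divr_gt0 // ?mulr_gt0 // subr_gt0.
have hn0 : 0 <= n%:R / (2 * n.+1%:R) :> R by rewrite divr_ge0 ?mulr_ge0 ?ler0n.
set s := (n%:R / (2 * n.+1%:R) + (n%:R / 2 - q)) / 2.
have [hs hs2] : n%:R / (2 * n.+1%:R) < s /\ s < n%:R / 2 - q.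
  rewrite /s; move: hq hn0; clearbody q.
  move: (n%:R / (2 * n.+1%:R)) (n%:R / 2 : R) => A B; split; lra.
have s0 : 0 < s by apply: le_lt_trans hn0 hs.
have [C HC] := H s hs.
set a := n%:R / 2 - q - s.
have a0 : 0 < a by rewrite /a; lra.
set C1 := Num.max C 1.
have C11 : 1 <= C1 by rewrite le_max lexx orbT.
set l2n := ln (2 * n%:R) : R.
set lc := ln (cos 1) : R.
set K := ln C1 + 2^-1 * s * l2n + q * l2n - lc.
set y := (`|K| + 1) / a.
have y0 : 0 <= y by rewrite divr_ge0 ?ltW // addr_ge0.
have ay : a * y = `|K| + 1 by rewrite /y mulrC divfK // gt_eqF.
set L := expR y.
have L1 : 1 <= L by apply: le_trans (expR_ge1Dx y); lra.
have L0 : 0 < L by apply: lt_le_trans L1.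
have hl := maxfun_lb n L p hn L1 p0.
have hh := hs_ub n L s (ltW L0) (ltW s0).
have := HC (@box R n 0 L) (fun _ => 0%R) (measurable_box _ _ _) ltac:(exact: measurable_cst).
rewrite cabs_iint ?ltry ?(ltW L0) // => /(_ isT).
have hlt : (Hs_norm s (@box R n 0 L) (fun _ => 0%R) < +oo)%E.
  by rewrite /Hs_norm; apply: poweR_lty; apply: le_lt_trans hh (ltry _).
move=> /(_ hlt) HC'.
set Hb := ((1 + n%:R * L ^+ 2) `^ s * L ^+ n) `^ (2^-1).
have hsb : (Hs_norm s (@box R n 0 L) (fun _ => 0%R) <= Hb%:E)%E.
  rewrite /Hs_norm /Hb -poweR_EFin; apply: gt0_ler_poweR => //.
  - by rewrite in_itv /= leey andbT; apply: iint_ge0 => v; rewrite lee_fin mulr_ge0 ?powR_ge0 ?sqr_ge0.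
  - by rewrite in_itv /= leey andbT lee_fin mulr_ge0 ?powR_ge0 ?exprn_ge0 ?ltW.
have hs0 : (0 <= Hs_norm s (@box R n 0 L) (fun _ => 0%R))%E by apply: poweR_ge0.
have {hl}hl := le_trans hl HC'.
move: hl hsb hs0; case: (Hs_norm s (@box R n 0 L) (fun _ => 0%R)) => [h||] //=.
rewrite -EFinM !lee_fin => hA hhb h0.
set A := (((cos 1 * L ^+ n) `^ p * (2 * n%:R * L)^-1 ^+ n) `^ p^-1) in hA.
have c1 : 0 < cos 1 :> R := cos1_gt0 R.
have cL0 : 0 < cos 1 * L ^+ n by rewrite mulr_gt0 // exprn_gt0.
have d0 : 0 < (2 * n%:R * L)^-1 by rewrite invr_gt0 !mulr_gt0.
have A0 : 0 < A by rewrite powR_gt0 // mulr_gt0 ?powR_gt0 ?exprn_gt0.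
have pos1 : 0 < 1 + n%:R * L ^+ 2.
  have : 0 <= n%:R * L ^+ 2 by rewrite mulr_ge0 ?sqr_ge0 ?ler0n.
  lra.
have X0 : 0 < (1 + n%:R * L ^+ 2) `^ s * L ^+ n.
  by rewrite mulr_gt0 ?powR_gt0 ?exprn_gt0.
have Hb0 : 0 < Hb by rewrite powR_gt0.
have C10 : 0 < C1 by apply: lt_le_trans C11.
have hAC : A <= C1 * Hb.
  apply: le_trans hA _; apply: le_trans (_ : C1 * h <= _).
    by rewrite ler_wpM2r // le_max lexx.
  by rewrite ler_wpM2l // ltW.
have hln : ln A <= ln C1 + ln Hb.
  by rewrite -lnM ?posrE ?mulr_gt0 // ler_ln ?posrE ?mulr_gt0.
have lnL : ln L = y by rewrite /L expRK.
have e1 : ln (cos 1 * L ^+ n) = lc + y * n%:R.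
  by rewrite lnM ?posrE ?exprn_gt0 // lnXn // lnL mulr_natr.
have e2 : ln ((2 * n%:R * L)^-1 ^+ n) = - (l2n + y) * n%:R.
  by rewrite lnXn // lnV ?posrE ?mulr_gt0 // lnM ?posrE ?mulr_gt0 // lnL /l2n !mulr_natr.
have eA : ln A = lc + n%:R * y - q * (l2n + y).
  rewrite /A ln_powR lnM ?posrE ?powR_gt0 ?exprn_gt0 // ln_powR e1 e2 /q.
  by field; rewrite gt_eqF.
have eHb : ln Hb = 2^-1 * (s * ln (1 + n%:R * L ^+ 2) + y * n%:R).
  rewrite /Hb ln_powR lnM ?posrE ?powR_gt0 ?exprn_gt0 //.
  by rewrite ln_powR lnXn // lnL mulr_natr.
have l1 : ln (1 + n%:R * L ^+ 2) <= l2n + 2 * y.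
  have h1 : (1 : R) <= n%:R by rewrite ler1n.
  have h2 : (1 : R) <= L ^+ 2 by rewrite expr_ge1 // ltW.
  have h3 : (1 : R) <= n%:R * L ^+ 2 by nra.
  apply: (@le_trans _ _ (ln (2 * n%:R * L ^+ 2))).
    rewrite ler_ln ?posrE ?mulr_gt0 ?exprn_gt0 //; last by lra.
  by rewrite lnM ?posrE ?mulr_gt0 ?exprn_gt0 // lnXn // lnL -[y *+ 2]mulr_natl.
have l2 := ler_wpM2l (ltW s0) l1.
have kK : K <= `|K| := ler_norm K.
move: ay; rewrite /a /K => ay.
move: kK; rewrite /K => kK.
lra.
Qed.
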